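(* Let $\mathcal{G}=(V,\mathit{Act},\mathcal{R})$ be a normed BPA system. For all $\alpha,\gamma\in V^*$: $\alpha\gamma\sim\gamma$ if and only if $\alpha\in(R_\gamma)^*$, where $R_\gamma=\{X\in V\mid X\gamma\sim\gamma\}$.
   Context: A BPA system $\mathcal{G}=(V,\mathit{Act},\mathcal{R})$: finite variables $V$, finite actions $\mathit{Act}$ (possibly containing the silent action $\tau$), rules $A\xrightarrow{a}\alpha$ ($A\in V,\alpha\in V^*$). LTS $\mathcal{L}_\mathcal{G}$: states $V^*$, transitions $A\beta\xrightarrow{a}\alpha\beta$ for rules $A\xrightarrow{a}\alpha$, $\beta\in V^*$. $\mathcal{G}$ is normed if every variable $A$ satisfies $A\xrightarrow{w}\varepsilon$ for some $w\in\mathit{Act}^*$. $\sim$ denotes branching bisimilarity in $\mathcal{L}_\mathcal{G}$ (largest relation $\mathcal{B}$ such that for $(s,t)\in\mathcal{B}$ each move $s\xrightarrow{a}s'$ is matched by $a=\tau$ with $(s',t)\in\mathcal{B}$, or by a path $t=t_0\xrightarrow{\tau}\cdots\xrightarrow{\tau}t_k\xrightarrow{a}t'$ with $(s',t')\in\mathcal{B}$, $(s,t_i)\in\mathcal{B}$ for $i\in[1,k]$; and symmetrically). *)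

(* Defs.v *)
From mathcomp Require Import all_boot.
Set Implicit Arguments. Unset Strict Implicit. Unset Printing Implicit Defensive.

(* A BPA system: variables V (finite), visible actions A (finite); the label
   set is [option A], where [None] is the silent action tau (rules may or may
   not use it, so Act "possibly contains tau"). *)
Definition rule (V A : finType) := (V * option A * seq V)%type.

Section BPA.
Variables (V A : finType) (R : seq (rule V A)).

Definition step (s : seq V) (a : option A) (t : seq V) : Prop :=
  exists X beta alpha, s = X :: beta /\ t = alpha ++ beta /\ (X, a, alpha) \in R.

Inductive reach : seq V -> seq V -> Prop :=
| reach_refl s : reach s s
| reach_step s a t u : step s a t -> reach t u -> reach s u.

Definition normed : Prop := forall X : V, reach [:: X] [::].

Inductive tau_path (P : seq V -> Prop) (t : seq V) : seq V -> Prop :=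
| tau_path_refl : tau_path P t t
| tau_path_step u v : tau_path P t u -> step u None v -> P v -> tau_path P t v.

Definition bmatch (B : seq V -> seq V -> Prop) (s t : seq V) (a : option A) (s' : seq V) : Prop :=
  (a = None /\ B s' t) \/
  exists tk t', tau_path (B s) t tk /\ step tk a t' /\ B s' t'.

Definition branching_bisimulation (B : seq V -> seq V -> Prop) : Prop :=
  forall s t, B s t ->
    (forall a s', step s a s' -> bmatch B s t a s') /\
    (forall a t', step t a t' -> bmatch (fun x y => B y x) t s a t').

Definition bbisim (s t : seq V) : Prop :=
  exists B, branching_bisimulation B /\ B s t.

End BPA.

(* Main.v *)
Require Import Defs.
From mathcomp Require Import all_boot.
From mathcomp Require Import zify.
From Stdlib Require Import Classical.
Set Implicit Arguments. Unset Strict Implicit. Unset Printing Implicit Defensive.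

Section S.
Variables (V A : finType) (R : seq (rule V A)).
Notation bb := (bbisim R).

Lemma tau_path_mono (P Q : seq V -> Prop) t u :
  (forall x, P x -> Q x) -> tau_path R P t u -> tau_path R Q t u.
Proof.
move=> H; elim=> [|u0 v _ IH st Pv]; first constructor.
apply: tau_path_step IH st _; auto.
Qed.

Lemma tau_path_cat (P Q : seq V -> Prop) t u w :
  tau_path R P t u -> tau_path R Q u w -> (forall x, Q x -> P x) -> tau_path R P t w.
Proof.
move=> tp1 tp2 H; elim: tp2 => [|u0 v _ IH st Qv] //.
apply: tau_path_step IH st _; auto.
Qed.

Lemma bmatch_mono (B B' : seq V -> seq V -> Prop) s t a s' :
  (forall x y, B x y -> B' x y) -> bmatch R B s t a s' -> bmatch R B' s t a s'.
Proof.
move=> H [[-> Hb]|[tk [t' [tp [st Hb]]]]]; first by left; split; auto.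
right; exists tk, t'; split; first exact: (tau_path_mono (fun x => H s x) tp).
split; auto.
Qed.

Lemma bisim_sym B : branching_bisimulation R B ->
  branching_bisimulation R (fun x y => B y x).
Proof.
move=> HB x y Hxy; have [H1 H2] := HB y x Hxy.
split=> a z st; [exact: (H2 a z st) | exact: (H1 a z st)].
Qed.

Lemma bb_sym s t : bb s t -> bb t s.
Proof. by move=> [B [HB Hst]]; exists (fun x y => B y x); split=> //; apply: bisim_sym. Qed.

Lemma bb_refl s : bb s s.
Proof.
exists (fun x y => x = y); split=> //.
move=> x y <-; split=> a z st; right; exists x, z;
(split; first by apply: tau_path_refl); by split.
Qed.

Lemma comp_path (B1 B2 : seq V -> seq V -> Prop) s u t uk :
  branching_bisimulation R B2 -> B1 s u -> B2 u t -> tau_path R (B1 s) u uk ->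
  exists tk, tau_path R (fun x => exists y, B1 s y /\ B2 y x) t tk /\ B2 uk tk /\ B1 s uk.
Proof.
move=> HB2 Hsu Hut; elim=> [|ui v _ [tc [tp [Hb2 Hb1]]] st Hv].
  by exists t; split; [apply: tau_path_refl|split].
have [H1 _] := HB2 _ _ Hb2.
case: (H1 _ _ st) => [[_ Hvt]|[T [T' [tp2 [st2 HT']]]]].
  by exists tc; split => //; split.
exists T'; split; last by split.
apply: (tau_path_step (u:=T)) st2 _; last by exists v.
apply: tau_path_cat tp tp2 _ => x Hx; by exists ui.
Qed.

Lemma comp_fwd (B1 B2 : seq V -> seq V -> Prop) s u t a s' :
  branching_bisimulation R B1 -> branching_bisimulation R B2 -> B1 s u -> B2 u t ->
  step R s a s' -> bmatch R (fun x y => exists z, B1 x z /\ B2 z y) s t a s'.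
Proof.
move=> HB1 HB2 Hsu Hut st; have [H1 _] := HB1 _ _ Hsu.
case: (H1 _ _ st) => [[-> Hs'u]|[uk [u' [tp [st2 Hs'u']]]]].
  by left; split=> //; exists u.
have [tc [tp' [Hb2 Hb1]]] := comp_path HB2 Hsu Hut tp.
have [H2 _] := HB2 _ _ Hb2.
case: (H2 _ _ st2) => [[Ha Hu'tc]|[T [T' [tp2 [st3 HT']]]]].
  move: Hu'tc; case: tp' => [|tc0 tc1 tp0 st0 Q0] Hu'tc.
    by left; split=> //; exists u'.
  right; exists tc0, tc1; split; first exact: tp0.
  by split; [rewrite Ha | exists u'].
right; exists T, T'; split.
  by apply: tau_path_cat tp' tp2 _ => x Hx; exists uk.
by split=> //; exists u'.
Qed.

Lemma bb_trans s u t : bb s u -> bb u t -> bb s t.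
Proof.
move=> Hsu Hut; exists (fun x y => exists z, bb x z /\ bb z y); split; last by exists u.
move=> x y [z [[B1 [HB1 H1]] [B2 [HB2 H2]]]]; split=> a x' st.
  apply: bmatch_mono (comp_fwd HB1 HB2 H1 H2 st) => p q [z' [Hp Hq]].
  by exists z'; split; [exists B1|exists B2].
apply: bmatch_mono (comp_fwd (bisim_sym HB2) (bisim_sym HB1) H2 H1 st) => p q [z' [Hp Hq]].
by exists z'; split; [exists B1|exists B2].
Qed.

Definition Bl x y := exists beta s t, x = beta ++ s /\ y = beta ++ t /\ bb s t.

Lemma lc_fwd beta s t a x' : bb s t -> step R (beta ++ s) a x' ->
  bmatch R Bl (beta ++ s) (beta ++ t) a x'.
Proof.
case: beta => [|Y beta] /= Hst st.
  case: Hst => B [HB Hb]; have [H1 _] := HB _ _ Hb.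
  apply: bmatch_mono (H1 _ _ st) => p q Hpq.
  by exists [::], p, q; split=> //; split=> //; exists B.
case: st => [X [b [al [E [-> Hin]]]]]; case: E => EY Eb; subst b; rewrite -EY in Hin.
right; exists (Y :: beta ++ t), (al ++ beta ++ t); split; first apply: tau_path_refl.
split; first by exists Y, (beta ++ t), al.
by exists (al ++ beta), s, t; rewrite -!catA.
Qed.

Lemma Bl_sym x y : Bl x y -> Bl y x.
Proof. by move=> [b [s [t [-> [-> H]]]]]; exists b, t, s; split; [|split; [|apply: bb_sym]]. Qed.

Lemma bb_prefix beta s t : bb s t -> bb (beta ++ s) (beta ++ t).
Proof.
move=> H; exists Bl; split; last by exists beta, s, t.
move=> x y [b [s0 [t0 [-> [-> H0]]]]]; split=> a z st; first exact: lc_fwd.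
apply: bmatch_mono (lc_fwd (bb_sym H0) st) => p q; exact: Bl_sym.
Qed.

Inductive cpath : seq V -> seq V -> nat -> Prop :=
| cp_refl s : cpath s s 0
| cp_inert s s' u k : step R s None s' -> bb s s' -> cpath s' u k -> cpath s u k
| cp_step s a s' u k : step R s a s' -> cpath s' u k -> cpath s u k.+1.

Lemma cpath_cat a b c k1 k2 : cpath a b k1 -> cpath b c k2 -> cpath a c (k1 + k2).
Proof.
elim=> [s|s s' u k st H _ IH|s a0 s' u k st _ IH] cp //.
  exact: cp_inert st H (IH cp).
exact: cp_step st (IH cp).
Qed.

Lemma cpath0_bb s u k : cpath s u k -> k = 0 -> bb s u.
Proof.
elim=> [s0|s0 s' u0 k0 st H _ IH|] // E; first exact: bb_refl.
exact: bb_trans H (IH E).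
Qed.

Lemma tp_cp (P : seq V -> Prop) s t tk : (forall v, P v -> bb s v) -> bb s t ->
  tau_path R P t tk -> cpath t tk 0 /\ bb s tk.
Proof.
move=> HP Hst; elim=> [|u v _ [cp Hsu] st Pv]; first by split; [constructor|].
split; last by apply: HP.
have := cp_inert st (bb_trans (bb_sym Hsu) (HP _ Pv)) (cp_refl v).
by move/(cpath_cat cp); rewrite addn0.
Qed.

Lemma tau_nil (P : seq V -> Prop) tk : tau_path R P [::] tk -> tk = [::].
Proof. by elim=> // u v _ -> [X [b [al [E _]]]]. Qed.

Lemma nil_cp t u : bb t [::] -> reach R t u -> u = [::] -> cpath t [::] 0.
Proof.
move=> H r; elim: r H => [s H ->|s a s' u0 st _ IH H Eu]; first constructor.
case: H => B [HB Hb]; have [H1 _] := HB _ _ Hb.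
case: (H1 _ _ st) => [[Ha Hb']|[tk [t' [tp [st2 _]]]]].
  rewrite Ha in st.
  have bs't : bb s' [::] by exists B.
  exact: (cp_inert st (bb_trans (ex_intro _ B (conj HB Hb)) (bb_sym bs't)) (IH bs't Eu)).
by rewrite (tau_nil tp) in st2; case: st2 => X [b [al [E _]]].
Qed.

Lemma reach_app s u w : reach R s u -> reach R (s ++ w) (u ++ w).
Proof.
elim=> [s0|s0 a t u0 [X [b [al [-> [-> Hin]]]]] _ IH]; first exact: reach_refl.
apply: (reach_step (a:=a)) IH; exists X, (b ++ w), al; by split=> //; rewrite catA.
Qed.

Lemma reach_trans s u w : reach R s u -> reach R u w -> reach R s w.
Proof. elim=> // s0 a t u0 st _ IH H; exact: reach_step st (IH H). Qed.

Lemma normed_reach : normed R -> forall w, reach R w [::].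
Proof.
move=> Hn; elim=> [|X w IH]; first constructor.
apply: reach_trans IH; exact: (reach_app w (Hn X)).
Qed.

Lemma transfer : normed R -> forall s u k, cpath s u k -> u = [::] ->
  forall t, bb s t -> exists k', k' <= k /\ cpath t [::] k'.
Proof.
move=> Hn s u k; elim=> [s0 -> t Hst|s0 s' u0 k0 st Hb _ IH Eu t Hst|s0 a s' u0 k0 st _ IH Eu t Hst].
- exists 0; split=> //; exact: nil_cp (bb_sym Hst) (normed_reach Hn t) erefl.
- exact: IH Eu t (bb_trans (bb_sym Hb) Hst).
case: Hst => B [HB Hb]; have [H1 _] := HB _ _ Hb.
case: (H1 _ _ st) => [[Ha Hs't]|[tk [t' [tp [st2 Hs't']]]]].
  have [k' [le cp]] := IH Eu t (ex_intro _ B (conj HB Hs't)).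
  by exists k'; split=> //; apply: leq_trans le _.
have [cp1 _] := tp_cp (P := B s0) (s:=s0) (fun v Hv => ex_intro _ B (conj HB Hv))
   (ex_intro _ B (conj HB Hb)) tp.
have [k' [le cp2]] := IH Eu t' (ex_intro _ B (conj HB Hs't')).
exists k'.+1; split=> //.
by have := cpath_cat cp1 (cp_step st2 cp2); rewrite add0n.
Qed.

Lemma cp_split s u k : cpath s u k -> forall d w z, s = d ++ w -> w = z ++ u ->
  exists k1 k2, k = k1 + k2 /\ cpath s w k1 /\ cpath w u k2.
Proof.
elim=> [s0|s0 s' u0 k0 st Hb cp IH|s0 a s' u0 k0 st cp IH] d w z Es Ew.
- have Hs : size s0 = size d + (size z + size s0) by rewrite {1}Es Ew !size_cat.
  move: Hs Es Ew; case: d => [|? ?]; case: z => [|? ?] /=; try lia.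
  move=> _ -> _; exists 0, 0; split=> //; split; constructor.
- case: d Es => [|Y d'] /= Es.
    exists 0, k0; split=> //; split; first by rewrite Es; constructor.
    by rewrite -Es; exact: cp_inert st Hb cp.
  move: st Hb cp IH; case=> [X [b [al [E [-> Hin]]]]] Hb cp IH.
  rewrite Es in E; case: E => EX Eb; subst b X.
  have [k1 [k2 [Ek [c1 c2]]]] := IH (al ++ d') w z (catA _ _ _) Ew.
  exists k1, k2; split=> //; split=> //.
  apply: cp_inert Hb c1; exists Y, (d' ++ w), al; by split.
- case: d Es => [|Y d'] /= Es.
    exists 0, k0.+1; split=> //; split; first by rewrite Es; constructor.
    by rewrite -Es; exact: cp_step st cp.
  move: st cp IH; case=> [X [b [al [E [-> Hin]]]]] cp IH.
  rewrite Es in E; case: E => EX Eb; subst b X.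
  have [k1 [k2 [Ek [c1 c2]]]] := IH (al ++ d') w z (catA _ _ _) Ew.
  exists k1.+1, k2; split; first by rewrite Ek.
  split=> //; apply: (cp_step (a:=a)) c1; exists Y, (d' ++ w), al; by split.
Qed.

Lemma reach_cp s u : reach R s u -> exists k, cpath s u k.
Proof.
elim=> [s0|s0 a t u0 st _ [k cp]]; first by exists 0; constructor.
by exists k.+1; exact: cp_step st cp.
Qed.

End S.

Lemma minP (P : nat -> Prop) : (exists n, P n) -> exists n, P n /\ forall m, P m -> n <= m.
Proof.
move=> [n Pn].
suff H : forall n m, m <= n -> P m -> exists n0, P n0 /\ forall m, P m -> n0 <= m.
  exact: H (leqnn n) Pn.
elim=> [|n0 IH] m le Pm.
  by exists m; split=> // m' _; lia.
case: (classic (exists m', P m' /\ m' < m)) => [[m' [Pm' lt]]|H].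
  apply: (IH m') => //; lia.
exists m; split=> // m' Pm'; rewrite leqNgt; apply/negP => lt; apply: H.
by exists m'.
Qed.

Theorem proposition4p6 (V A : finType) (R : seq (rule V A)) :
  normed R ->
  forall alpha gamma : seq V,
    bbisim R (alpha ++ gamma) gamma <->
    (forall X, X \in alpha -> bbisim R (X :: gamma) gamma).
Proof.
move=> Hn alpha gamma; split.
  move=> H X Hin; case/splitPr: Hin H => a1 a2 H.
  have [k0 [cp0 min]] := minP (reach_cp (normed_reach Hn gamma)).
  have [k' [le cp]] := transfer Hn cp0 erefl (bb_sym H).
  have [k1 [k2 [Ek [c1 c2]]]] := cp_split cp (d:=a1 ++ X :: a2) (z:=gamma) erefl (esym (cats0 gamma)).
  have := min _ c2; move=> le2.
  have E1 : k1 = 0 by lia.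
  have [k3 [k4 [Ek' [_ c3]]]] := cp_split c1 (d:=a1) (w:=X :: a2 ++ gamma) (z:=X :: a2)
     (esym (catA _ _ _)) erefl.
  have E4 : k4 = 0 by lia.
  have [k5 [k6 [Ek'' [c5 c6]]]] := cp_split c3 (d:=[:: X]) (w:=a2 ++ gamma) (z:=a2) erefl erefl.
  have E5 : k5 = 0 by lia.
  have E6 : k6 = 0 by lia.
  have h6 := cpath0_bb c6 E6.
  have h5 := cpath0_bb c5 E5.
  exact: bb_trans (bb_prefix [:: X] (bb_sym h6)) (bb_trans h5 h6).
elim: alpha => [|X al IH] H /=; first exact: bb_refl.
apply: bb_trans (bb_prefix [:: X] (IH _)) (H X (mem_head X al)).
by move=> Y HY; apply: H; rewrite in_cons HY orbT.
Qed.
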